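(* Let $k \geq 1$ be an integer. The consensus number of the atomic $k$-sliding read/write register type is at least $k$; that is, in an asynchronous system of $k$ crash-prone processes communicating through atomic read/write registers and $k$-sliding read/write registers, there is a wait-free algorithm implementing a consensus object.
   Context: System model: $n$ sequential asynchronous processes $p_1,\dots,p_n$ communicating through shared atomic objects; any number of processes may crash (halt prematurely, never recovering); implementations must be wait-free (every operation invoked by a non-crashed process terminates regardless of the behavior of the others). A consensus object provides a single operation $\mathrm{propose}(v)$, invoked at most once per process and returning a value, satisfying: Validity (a decided value was proposed by some process), Agreement (no two processes decide different values), Termination (every correct process that invokes $\mathrm{propose}()$ decides). The consensus number of an object type $T$ is the largest $n$ such that consensus can be wait-free implemented among $n$ processes using atomic read/write registers and objects of type $T$ ($+\infty$ if no such finite $n$ exists). An atomic $k$-sliding read/write register is a shared object whose state is a sequence of values (initially empty), with two atomic (linearizable) operations: $\mathrm{write}(v)$ appends $v$ to the end of the sequence, and $\mathrm{read}()$ returns the ordered sequence of the last $k$ values written before it in the linearization order, where if only $x<k$ values have been written the $k-x$ missing values are replaced by a default value $\bot$. *)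

(* Defs.v *)
From mathcomp Require Import all_boot.
Unset Strict Implicit. Unset Printing Implicit Defensive.

(* A read returns a
   sequence of (optional, None = bottom) values, after which the process moves
   to a local state computed from the response; a write appends a value. *)
Inductive action (V Val S : Type) (m : nat) : Type :=
  | ADecide of V
  | ARead of 'I_m & (seq (option Val) -> S)
  | AWrite of 'I_m & Val & S.

(* The algorithm may use any finite
   number n_obj of shared objects; object o is a k-sliding register if
   is_sliding o, and an ordinary atomic read/write register otherwise. *)
Record algorithm (V : Type) (n : nat) : Type := Algorithm {
  n_obj : nat;
  is_sliding : 'I_n_obj -> bool;
  val_t : Type;
  lstate : Type;
  start : 'I_n -> V -> lstate;              (* state when invoking propose(v) *)
  next : 'I_n -> lstate -> action V val_t lstate n_obj }.
Arguments n_obj {V n}. Arguments is_sliding {V n}. Arguments val_t {V n}.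
Arguments lstate {V n}. Arguments start {V n}. Arguments next {V n}.

(* The last w values of the write history h (oldest first), the missing ones
   (if fewer than w values were written) being replaced by bottom = None. *)
Definition window {T : Type} (w : nat) (h : seq T) : seq (option T) :=
  nseq (w - size h) None ++ map Some (drop (size h - w) h).

Section Semantics.
Variables (V : Type) (n k : nat) (A : algorithm V n).
Arguments ADecide {V Val S m}.
Arguments ARead {V Val S m}.
Arguments AWrite {V Val S m}.

(* Global configuration: local states, and the write history of each object
   (the state of a k-sliding register is the sequence of values written; an
   ordinary register is modelled the same way, a read returning the last value
   written, or bottom). *)
Record config := Config {
  c_loc : 'I_n -> lstate A;
  c_mem : 'I_(n_obj A) -> seq (val_t A) }.

Definition init_config (inp : 'I_n -> V) : config :=
  Config (fun i => start A i (inp i)) (fun _ => [::]).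

Definition read_resp (o : 'I_(n_obj A)) (h : seq (val_t A)) :=
  window (if is_sliding A o then k else 1) h.

Definition step (s : option 'I_n) (c : config) : config :=
  match s with
  | None => c
  | Some i =>
    match next A i (c_loc c i) with
    | ADecide _ => c
    | ARead o f =>
        Config (fun j => if j == i then f (read_resp o (c_mem c o)) else c_loc c j)
               (c_mem c)
    | AWrite o x s' =>
        Config (fun j => if j == i then s' else c_loc c j)
               (fun o' => if o' == o then rcons (c_mem c o) x else c_mem c o')
    end
  end.

(* An execution is determined by the inputs and an arbitrary (adversarial)
   schedule; a process that crashes simply stops being scheduled; a process
   that is never scheduled never invokes propose(). *)
Fixpoint run (inp : 'I_n -> V) (sched : nat -> option 'I_n) (t : nat) : config :=
  match t with
  | 0 => init_config inp
  | t'.+1 => step (sched t') (run inp sched t')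
  end.

Definition decides inp sched (i : 'I_n) (t : nat) (v : V) : Prop :=
  sched t = Some i /\ next A i (c_loc (run inp sched t) i) = ADecide v.

Definition correct (sched : nat -> option 'I_n) (i : 'I_n) : Prop :=
  forall t, exists t', t <= t' /\ sched t' = Some i.

Definition wait_free_consensus : Prop :=
  forall (inp : 'I_n -> V) (sched : nat -> option 'I_n),
    (forall i j t t' v w, decides inp sched i t v -> decides inp sched j t' w -> v = w) /\
    (* Validity: the decided value was proposed by a process that invoked propose *)
    (forall i t v, decides inp sched i t v ->
       exists j t', t' <= t /\ sched t' = Some j /\ v = inp j) /\
    (forall i, correct sched i -> exists t v, decides inp sched i t v).

End Semantics.

(* Main.v *)
Require Import Defs.
From mathcomp Require Import all_boot.

Arguments ADecide {V Val S m}.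
Arguments ARead {V Val S m}.
Arguments AWrite {V Val S m}.

Inductive st (V : Type) : Type := SW of V | SR | SD of V.
Arguments SW {V}. Arguments SR {V}. Arguments SD {V}.

Definition firstsome {V : Type} (r : seq (option V)) : option V :=
  foldr (fun o acc => if o is Some v then Some v else acc) None r.

Definition nxt {V : Type} (s : st V) : action V V (st V) 1 :=
  match s with
  | SW v => AWrite ord0 v SR
  | SR => ARead ord0 (fun r => if firstsome r is Some v then SD v else SR)
  | SD v => ADecide v
  end.

Definition alg (V : Type) (k : nat) : algorithm V k :=
  @Algorithm V k 1 (fun _ => true) V (st V) (fun _ v => SW v) (fun _ s => nxt s).

Definition isSW {V : Type} (s : st V) : bool := if s is SW _ then true else false.

Definition rank {V : Type} (s : st V) : nat :=
  match s with SW _ => 0 | SR => 1 | SD _ => 2 end.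

Definition cf V k inp sched t := run V k k (alg V k) inp sched t.
Definition loc V k inp sched t := c_loc V k (alg V k) (cf V k inp sched t).
Definition hist V k inp sched t : seq V := c_mem V k (alg V k) (cf V k inp sched t) ord0.

Lemma firstsome_win (V : Type) (n : nat) (x : V) h :
  firstsome (nseq n None ++ map Some (x :: h)) = Some x.
Proof. by elim: n. Qed.

Definition Inv V k (inp : 'I_k -> V) (sched : nat -> option 'I_k) t : Prop :=
  [/\ size (hist V k inp sched t) + #|[pred i | isSW (loc V k inp sched t i)]| = k,
      (forall i v, loc V k inp sched t i = SW v -> v = inp i),
      (forall x h', hist V k inp sched t = x :: h' ->
         exists j t', t' < t /\ sched t' = Some j /\ x = inp j),
      (forall i v, loc V k inp sched t i = SD v -> exists h', hist V k inp sched t = v :: h') &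
      (forall i, loc V k inp sched t i = SR -> exists x h', hist V k inp sched t = x :: h')].

Lemma cfS V k inp sched t :
  cf V k inp sched t.+1 = step V k k (alg V k) (sched t) (cf V k inp sched t).
Proof. by []. Qed.

Lemma Inv0 V k inp sched : Inv V k inp sched 0.
Proof.
split => //=.
- rewrite /hist /loc /= add0n -[RHS]card_ord; apply: eq_card => i //.
- by move=> i v [->].
Qed.

Lemma InvS V k inp sched t : Inv V k inp sched t -> Inv V k inp sched t.+1.
Proof.
case=> Hc Hsw Hh Hsd Hsr.
rewrite /Inv /hist /loc cfS.
case Es: (sched t) => [i|]; last first.
  split => //; move=> x h' /Hh [j [t' [? ?]]]; exists j, t'; split => //; exact: ltnW.
rewrite /step /=.
move: Hc Hsw Hh Hsd Hsr; rewrite /hist /loc.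
set c := cf V k inp sched t => Hc Hsw Hh Hsd Hsr.
case El: (c_loc V k (alg V k) c i) => [v||v] /=.
-
  split.
  + apply: (etrans _ Hc); rewrite size_rcons [X in _ = _ + X](cardD1 i) inE El /= add1n addnS addSn.
    congr (_.+1); congr (_ + _).
    apply: eq_card => j; rewrite !inE.
    by case: eqP.
  + move=> j w; case: eqP => // _; exact: Hsw.
  + move=> x h'; case E: (c_mem V k (alg V k) c ord0) => [|y h0] /=.
      case=> <- _; exists i, t; split => //; split => //; exact: Hsw El.
    case=> <- _; have [j [t' [? ?]]] := Hh _ _ E; exists j, t'; split => //; exact: ltnW.
  + move=> j w; case: eqP => // _ /Hsd [h' ->]; by exists (rcons h' v).
  + move=> j; case: eqP => [_ _|_ /Hsr [x [h' ->]]]; last by exists x, (rcons h' v).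
    by case: (c_mem V k (alg V k) c ord0) => [|y h0] /=; [exists v, [::] | exists y, (rcons h0 v)].
-
  have [x [h' E]] := Hsr _ El.
  have Hle : size (c_mem V k (alg V k) c ord0) <= k.
    by apply: (leq_trans _ (eq_leq Hc)); rewrite leq_addr.
  have Hread : firstsome (read_resp V k k (alg V k) ord0 (c_mem V k (alg V k) c ord0)) = Some x.
    rewrite /read_resp /= /window.
    move: (Hle); rewrite -subn_eq0 => /eqP ->; rewrite drop0 E; exact: firstsome_win.
  rewrite Hread.
  split.
  + apply: (etrans _ Hc); congr (_ + _); apply: eq_card => j; rewrite !inE.
    by case: eqP => [->|] //=; rewrite El.
  + move=> j w; case: eqP => // _; exact: Hsw.
  + move=> y h0 E'; have [j [t' [? ?]]] := Hh _ _ E'; exists j, t'; split => //; exact: ltnW.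
  + move=> j w; case: eqP => [_ [<-]|_ /Hsd //]; by exists h'.
  + move=> j; case: eqP => [//|_ /Hsr //].
-
  split => //.
  move=> y h0 E'; have [j [t' [? ?]]] := Hh _ _ E'; exists j, t'; split => //; exact: ltnW.
Qed.

Lemma Inv_all V k inp sched t : Inv V k inp sched t.
Proof. elim: t => [|t IH]; [exact: Inv0 | exact: InvS]. Qed.

Lemma hist_step V k inp sched t :
  exists s, hist V k inp sched t.+1 = hist V k inp sched t ++ s.
Proof.
rewrite /hist cfS; case: (sched t) => [i|] /=; last by exists [::]; rewrite cats0.
case: (c_loc V k (alg V k) (cf V k inp sched t) i) => [v||v] /=.
- by exists [:: v]; rewrite cats1.
- by exists [::]; rewrite cats0.
- by exists [::]; rewrite cats0.
Qed.

Lemma hist_mono V k inp sched t d :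
  exists s, hist V k inp sched (t + d) = hist V k inp sched t ++ s.
Proof.
elim: d => [|d [s IH]]; first by exists [::]; rewrite addn0 cats0.
have [s' E] := hist_step V k inp sched (t + d).
by exists (s ++ s'); rewrite addnS E IH catA.
Qed.

Lemma loc_other V k inp sched t j :
  sched t <> Some j -> loc V k inp sched t.+1 j = loc V k inp sched t j.
Proof.
rewrite /loc cfS; case: (sched t) => [i|] //= Hne.
case: (c_loc V k (alg V k) (cf V k inp sched t) i) => [v||v] //=;
  case: eqP => // E; by rewrite E in Hne.
Qed.

Lemma loc_SD V k inp sched t j v :
  loc V k inp sched t j = SD v -> loc V k inp sched t.+1 j = SD v.
Proof.
rewrite /loc cfS; case: (sched t) => [i|] //=.
case E: (c_loc V k (alg V k) (cf V k inp sched t) i) => [w||w] //=;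
  case: eqP => // ->; by rewrite E.
Qed.

Lemma rank_mono V k inp sched t j :
  rank (loc V k inp sched t j) <= rank (loc V k inp sched t.+1 j).
Proof.
rewrite /loc cfS; case: (sched t) => [i|] //=.
case E: (c_loc V k (alg V k) (cf V k inp sched t) i) => [w||w] //=;
  case: eqP => // ->; rewrite E //.
by case: firstsome.
Qed.

Lemma rank_prog V k inp sched t j :
  sched t = Some j -> rank (loc V k inp sched t j) < 2 ->
  rank (loc V k inp sched t j) < rank (loc V k inp sched t.+1 j).
Proof.
have [Hc _ _ _ Hsr] := Inv_all V k inp sched t.
move: Hc Hsr; rewrite /hist /loc cfS => Hc Hsr Es; rewrite Es /=.
case E: (c_loc V k (alg V k) (cf V k inp sched t) j) => [w||w] //=; rewrite eqxx //.
have [x [h' E']] := Hsr _ E.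
have Hle : size (c_mem V k (alg V k) (cf V k inp sched t) ord0) <= k.
  by apply: (leq_trans _ (eq_leq Hc)); rewrite leq_addr.
rewrite /read_resp /= /window.
move: (Hle); rewrite -subn_eq0 => /eqP ->; rewrite drop0 E' firstsome_win //.
Qed.

Lemma decides_SD V k inp sched i t v :
  decides V k k (alg V k) inp sched i t v -> loc V k inp sched t i = SD v.
Proof.
case=> _; rewrite /loc /cf /=.
by case: (c_loc V k (alg V k) (run V k k (alg V k) inp sched t) i) => [w||w] //= [->].
Qed.

Arguments decides_SD {V k inp sched i t v}.
Arguments rank_prog {V k inp sched t j}.

Lemma rank_plus V k inp sched t d j :
  rank (loc V k inp sched t j) <= rank (loc V k inp sched (t + d) j).
Proof.
elim: d => [|d IH]; first by rewrite addn0.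
by apply: (leq_trans IH); rewrite addnS; apply: rank_mono.
Qed.

Lemma SD_plus V k inp sched t d j v :
  loc V k inp sched t j = SD v -> loc V k inp sched (t + d) j = SD v.
Proof.
move=> H; elim: d => [|d IH]; first by rewrite addn0.
by rewrite addnS; apply: loc_SD.
Qed.

Arguments SD_plus {V k inp sched t} d {j v}.

Theorem theorem1 (k : nat) (hk : 1 <= k) (V : Type) :
  exists A : algorithm V k, wait_free_consensus V k k A.
Proof.
exists (alg V k) => inp sched; split; [|split].
-
  have key : forall i j t t' v w, t <= t' ->
      decides V k k (alg V k) inp sched i t v ->
      decides V k k (alg V k) inp sched j t' w -> v = w.
    move=> i j t t' v w Htt Hv Hw; have Hi := decides_SD Hv; have Hj := decides_SD Hw.
    have [_ _ _ Hsd _] := Inv_all V k inp sched t.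
    have [_ _ _ Hsd' _] := Inv_all V k inp sched t'.
    have [h1 E1] := Hsd _ _ Hi.
    have [h2 E2] := Hsd' _ _ Hj.
    have [s Es] := hist_mono V k inp sched t (t' - t).
    rewrite subnKC // E1 E2 in Es.
    by case: Es.
  move=> i j t t' v w Hv Hw.
  case: (leqP t t') => Htt; first exact: key Hv Hw.
  by symmetry; apply: key Hw Hv; apply: ltnW.
-
  move=> i t v Hv; have H := decides_SD Hv.
  have [_ _ Hh Hsd _] := Inv_all V k inp sched t.
  have [h' E] := Hsd _ _ H.
  have [j [t' [? [? ?]]]] := Hh _ _ E.
  by exists j, t'; split => //; apply: ltnW.
-
  move=> i Hcor.
  have reach : forall n, n <= 2 -> exists t, n <= rank (loc V k inp sched t i).
    elim=> [|n IH] Hn; first by exists 0.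
    have [t Ht] := IH (ltnW Hn).
    have [t' [Htt Hs]] := Hcor t.
    have Hr : n <= rank (loc V k inp sched t' i).
      by apply: (leq_trans Ht); rewrite -(subnKC Htt); apply: rank_plus.
    case: (ltnP (rank (loc V k inp sched t' i)) 2) => H2.
      exists t'.+1; apply: (leq_trans _ (rank_prog Hs H2)); by rewrite ltnS.
    by exists t'; apply: leq_trans H2.
  have [t Ht] := reach 2 (leqnn 2).
  case E: (loc V k inp sched t i) Ht => [w||w] //= _.
  have [t' [Htt Hs]] := Hcor t.
  exists t', w; split => //.
  have := SD_plus (t' - t) E; rewrite subnKC // /loc /cf => ->.
  by [].
Qed.
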